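(* Consider the admission control model described in the context, with discount rate $\alpha>0$, and suppose $0\le \Delta d_{i+1}\le \Delta d_i$ for $1\le i\le n-1$ and $\Delta d_1>0$. Then: (a) $w^S_i>0$ for all $i\in\{0,\dots,n-1\}$ and $S\in\mathcal F$; (b) for each fixed $i$, $w^S_i$ is nondecreasing in $S\in\mathcal F$ among sets containing $i$: if $S,T\in\mathcal F$ with $i\in S\subset T$, then $w^S_i\le w^T_i$.
   Context: Admission control model: a single-server queue whose number in system $L(t)\in\{0,1,\dots,n\}$ ($n\ge1$) evolves in continuous time; in state $i$ arrivals occur at rate $\lambda_i>0$ and services at rate $\mu_i>0$ ($1\le i\le n$), $\mu_0=0$. At each time the entry gate is shut ($a=1$, arrivals rejected) or open ($a=0$, arrivals admitted); in state $n$ it is always shut. Discount rate $\alpha>0$. For $S\subseteq\{0,\dots,n-1\}$, the $S$-active policy shuts the gate exactly in states $S\cup\{n\}$; $b^S_i=E_i[\int_0^\infty\lambda_{L(t)}a(t)e^{-\alpha t}dt]$ under it, starting from $i$. Marginal workloads: $w^S_i=\lambda_i[1-(b^S_{i+1}-b^S_i)]$, $0\le i\le n-1$. $\mathcal F=\{S_1,\dots,S_{n+1}\}$ with $S_k=\{k-1,\dots,n-1\}$ ($1\le k\le n$), $S_{n+1}=\emptyset$. Notation: $\Delta x_i=x_i-x_{i-1}$, $d_i=\mu_i-\lambda_i$ ($d_0=-\lambda_0$). *)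

(* Defs.v *)
From HB Require Import structures.
From mathcomp Require Import all_boot all_order all_algebra.
Set Implicit Arguments. Unset Strict Implicit. Unset Printing Implicit Defensive.
Import Order.TTheory GRing.Theory Num.Theory.
Local Open Scope ring_scope.

Section Admission.
Variables (R : realFieldType) (n : nat) (lam mu : nat -> R) (alpha : R).

(* States are 'I_n.+1 = {0,...,n}.  S : {set 'I_n.+1} is meant to be a subset
   of {0,...,n-1}; the gate is shut exactly in S ∪ {n}. *)
Definition shut (S : {set 'I_n.+1}) (i : 'I_n.+1) : bool :=
  (i \in S) || (nat_of_ord i == n).

Definition uprate (S : {set 'I_n.+1}) (i : 'I_n.+1) : R :=
  if shut S i then 0 else lam i.

Definition gen (S : {set 'I_n.+1}) : 'M[R]_n.+1 :=
  \matrix_(i, j)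
    ((if nat_of_ord j == (nat_of_ord i).+1 then uprate S i else 0)
     + (if (nat_of_ord j).+1 == nat_of_ord i then mu i else 0)
     - (if j == i then uprate S i + mu i else 0)).

Definition rew (S : {set 'I_n.+1}) : 'cV[R]_n.+1 :=
  \col_i (if shut S i then lam i else 0).

(* b^S = E_i[ int_0^oo r(L(t)) e^{-alpha t} dt ] = (alpha I - Q^S)^{-1} r *)
Definition bvec (S : {set 'I_n.+1}) : 'cV[R]_n.+1 :=
  invmx (alpha%:M - gen S) *m rew S.

Definition b (S : {set 'I_n.+1}) (i : nat) : R := bvec S (inord i) ord0.

Definition w (S : {set 'I_n.+1}) (i : nat) : R :=
  lam i * (1 - (b S i.+1 - b S i)).

Definition Sk (k : nat) : {set 'I_n.+1} :=
  [set j : 'I_n.+1 | (k.-1 <= j)%N && (j < n)%N].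

Definition inF (S : {set 'I_n.+1}) : Prop :=
  exists2 k : nat, (1 <= k <= n.+1)%N & S = Sk k.

Definition d (i : nat) : R := mu i - lam i.
Definition Dd (i : nat) : R := d i - d i.-1.

End Admission.

(* Main.v *)
Require Import Defs.
From HB Require Import structures.
From mathcomp Require Import all_boot all_order all_algebra.
From mathcomp Require Import ring lra zify.
Import Order.TTheory GRing.Theory Num.Theory.
Local Open Scope ring_scope.

Fixpoint rho (R : realFieldType) (lam mu : nat -> R) (alpha : R) (k : nat) : R :=
  match k with
  | 0%N => 0
  | k'.+1 => lam k'.+1 / (alpha + mu k'.+1 + lam k' - mu k' * rho R lam mu alpha k')
  end.
Arguments rho {R}.

Definition Hyp {R : realFieldType} (n : nat) (lam mu : nat -> R) (alpha : R) : Prop :=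
  [/\ 0 < alpha, (forall i, (i <= n)%N -> 0 < lam i),
      (forall i, (1 <= i <= n)%N -> 0 < mu i), mu 0%N = 0 &
      (forall k, (1 <= k <= n)%N -> 0 <= Dd lam mu k)].


Lemma mu_ge0 (R : realFieldType) (n : nat) (lam mu : nat -> R) (alpha : R) : Hyp n lam mu alpha ->
  forall i, (i <= n)%N -> 0 <= mu i :> R.
Proof.
case=> _ _ hmu h0 _ [|i] hi; first by rewrite h0.
by apply/ltW/hmu; rewrite hi.
Qed.

Arguments mu_ge0 {R n lam mu alpha}.

Lemma rho_props (R : realFieldType) (n : nat) (lam mu : nat -> R) (alpha : R) : Hyp n lam mu alpha ->
  forall k, (k <= n)%N ->
  [/\ 0 <= rho lam mu alpha k, rho lam mu alpha k < 1 &
      mu k * rho lam mu alpha k <= lam k :> R].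
Proof.
move=> H; have [ha hl hm h0 hD] := H.
elim=> [|k IH] hk /=.
  by rewrite h0 mul0r lexx ltr01 ltW // hl.
have [r0 r1 rm] := IH (ltnW hk).
set r := rho lam mu alpha k.
have mk1 : 0 < mu k.+1 by apply: hm; rewrite hk.
have mk := mu_ge0 H k (ltnW hk).
have lk1 := hl _ hk.
have hd : 0 <= Dd lam mu k.+1 by apply: hD; rewrite hk.
rewrite /Dd /d /= in hd.
set D := alpha + mu k.+1 + lam k - mu k * r.
have Dpos : alpha + mu k.+1 <= D.
  rewrite /D. move: rm. move: (mu k * r) => z. clear D. move=> hz. clear -hz. change (alpha + mu k.+1 <= alpha + mu k.+1 + lam k - z).
  lra.
have Dp : 0 < D by lra.
have eD : lam k.+1 / D * D = lam k.+1 by rewrite mulfVK // gt_eqF.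
set q := lam k.+1 / D in eD *.
have q0 : 0 <= q by rewrite /q divr_ge0 // ltW.
have mr : mu k * r <= mu k by rewrite -[X in _ <= X]mulr1 ler_wpM2l // ltW.
split=> //.
- rewrite /q ltr_pdivrMr // mul1r /D.
  move: mr hd ha; move: (mu k * r) => z; lra.
- rewrite /q mulrA ler_pdivrMr // mulrC ler_wpM2l //; [exact: ltW| lra].
Qed.

Definition uu {R : realFieldType} (lam : nat -> R) (t i : nat) : R :=
  if (t <= i)%N then 0 else lam i.
Definition rr {R : realFieldType} (lam : nat -> R) (t i : nat) : R :=
  if (t <= i)%N then lam i else 0.
Definition Rows {R : realFieldType} (n : nat) (lam mu : nat -> R) (alpha : R)
  (t : nat) (b : nat -> R) : Prop :=
  forall i, (i <= n)%N ->
    (alpha + uu lam t i + mu i) * b i - uu lam t i * b i.+1 - mu i * b i.-1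
    = rr lam t i.

Lemma diff_eq (R : realFieldType) (n : nat) (lam mu : nat -> R) (alpha : R) t b :
  Rows n lam mu alpha t b -> forall i, (i < n)%N ->
  (alpha + mu i.+1 + uu lam t i) * (b i.+1 - b i) =
  uu lam t i.+1 * (b i.+2 - b i.+1) + mu i * (b i - b i.-1)
  + (rr lam t i.+1 - rr lam t i).
Proof.
move=> Hb i hi; have h1 := Hb i.+1 hi; have h2 := Hb i (ltnW hi).
rewrite /= in h1.
move: h1 h2; move: (uu lam t i) (uu lam t i.+1) (rr lam t i) (rr lam t i.+1) => u0 u1 r0 r1.
move=> h1 h2; rewrite -h1 -h2; ring.
Qed.

Lemma uu_lt (R : realFieldType) (lam : nat -> R) t i : (i < t)%N -> uu lam t i = lam i.
Proof. by move=> h; rewrite /uu leqNgt h. Qed.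
Lemma uu_ge (R : realFieldType) (lam : nat -> R) t i : (t <= i)%N -> uu lam t i = 0.
Proof. by move=> h; rewrite /uu h. Qed.
Lemma rr_lt (R : realFieldType) (lam : nat -> R) t i : (i < t)%N -> rr lam t i = 0.
Proof. by move=> h; rewrite /rr leqNgt h. Qed.
Lemma rr_ge (R : realFieldType) (lam : nat -> R) t i : (t <= i)%N -> rr lam t i = lam i.
Proof. by move=> h; rewrite /rr h. Qed.

Arguments rho_props {R n lam mu alpha}.

Lemma Dpos (R : realFieldType) (n : nat) (lam mu : nat -> R) (alpha : R) :
  Hyp n lam mu alpha -> forall i, (i < n)%N ->
  0 < alpha + mu i.+1 + lam i - mu i * rho lam mu alpha i.
Proof.
move=> H i hi; have [ha hl hm h0 hD] := H.
have [_ _ rm] := rho_props H _ (ltnW hi).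
have : 0 < mu i.+1 by apply: hm; rewrite hi.
move: rm; move: (mu i * rho lam mu alpha i) => z; lra.
Qed.

Arguments Dpos {R n lam mu alpha}.
Arguments diff_eq {R n lam mu alpha t b}.

Lemma open_rel (R : realFieldType) (n : nat) (lam mu : nat -> R) (alpha : R) t b :
  Hyp n lam mu alpha -> Rows n lam mu alpha t b -> (t <= n)%N ->
  forall i, (i < t)%N -> b i - b i.-1 = rho lam mu alpha i * (b i.+1 - b i).
Proof.
move=> H Hb tn; elim=> [|i IH] hi; first by rewrite /= subrr mul0r.
have hin : (i < n)%N by apply: leq_trans tn; apply: ltnW.
have E := diff_eq Hb _ hin.
rewrite uu_lt ?uu_lt ?rr_lt ?rr_lt // ?(ltnW hi) // in E.
rewrite IH ?(ltnW hi) // in E.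
have Dp := Dpos H _ hin.
rewrite /= mulrAC -[LHS](mulfK (lt0r_neq0 Dp)); congr (_ / _).
move: E; move: (b i.+1 - b i) (b i.+2 - b i.+1) (rho lam mu alpha i) => x y r E.
rewrite subr0 addr0 in E. rewrite mulrBr [x * (_ + _)]mulrC E; ring.
Qed.

Arguments open_rel {R n lam mu alpha t b}.

Lemma pt_eq (R : realFieldType) (n : nat) (lam mu : nat -> R) (alpha : R) t b :
  Hyp n lam mu alpha -> Rows n lam mu alpha t b -> (t <= n)%N ->
  b t - b t.-1 = rho lam mu alpha t.
Proof.
move=> H Hb; case: t Hb => [|s] Hb tn; first by rewrite subrr.
have hin : (s < n)%N by [].
have E := diff_eq Hb _ hin.
rewrite (@uu_lt _ lam s.+1 s) ?(@uu_ge _ lam s.+1 s.+1) ?(@rr_lt _ lam s.+1 s) ?(@rr_ge _ lam s.+1 s.+1) // in E.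
rewrite (open_rel H Hb tn s) // in E.
have Dp := Dpos H _ hin.
rewrite /= -[LHS](mulfK (lt0r_neq0 Dp)); congr (_ / _).
move: E; move: (b s.+1 - b s) (rho lam mu alpha s) => x r E.
rewrite mulrBr [x * (_ + _)]mulrC E; ring.
Qed.

Lemma closed_eq (R : realFieldType) (n : nat) (lam mu : nat -> R) (alpha : R) t b :
  Rows n lam mu alpha t b -> forall i, (t <= i)%N -> (i < n)%N ->
  (alpha + mu i.+1) * (b i.+1 - b i) = lam i.+1 - lam i + mu i * (b i - b i.-1).
Proof.
move=> Hb i ti hi; have E := diff_eq Hb _ hi.
rewrite !uu_ge ?rr_ge ?(leqW ti) // in E.
by rewrite -[alpha + mu i.+1]addr0 E mul0r add0r addrC.
Qed.

Lemma step_ineq (R : realFieldType) (A x p r r' l0 l1 m : R) :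
  0 < A -> A * x = l1 - l0 + m * p -> p <= r -> 0 <= m ->
  r' * (A + l0 - m * r) = l1 -> 0 <= l0 - m * r -> r' <= 1 -> x <= r'.
Proof.
move=> hA e pr m0 e' B0 r1.
rewrite -(ler_pM2l hA).
have h1 : m * p <= m * r by rewrite ler_wpM2l.
have h2 : 0 <= (l0 - m * r) * (1 - r') by rewrite mulr_ge0 // subr_ge0.
move: h1 h2; rewrite e -e'.
move=> h1 h2. nra.
Qed.

Arguments pt_eq {R n lam mu alpha t b}.
Arguments closed_eq {R n lam mu alpha t b}.

Lemma xstep (R : realFieldType) (n : nat) (lam mu : nat -> R) (alpha : R) t b :
  Hyp n lam mu alpha -> Rows n lam mu alpha t b -> forall j, (t <= j)%N -> (j < n)%N ->
  b j - b j.-1 <= rho lam mu alpha j -> b j.+1 - b j <= rho lam mu alpha j.+1.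
Proof.
move=> H Hb j tj jn pj.
have [ha hl hm h0 hD] := H.
have [_ _ rm] := rho_props H _ (ltnW jn).
have [_ r1 _] := rho_props H _ jn.
have Dp := Dpos H _ jn.
apply: (@step_ineq _ (alpha + mu j.+1) (b j.+1 - b j) (b j - b j.-1) (rho lam mu alpha j)
   (rho lam mu alpha j.+1) (lam j) (lam j.+1) (mu j)).
- by rewrite ltr_wpDr ?(ltW (mu_ge0 H _ _)) //; apply: ltW; apply: hm; rewrite jn.
- exact: closed_eq Hb _ tj jn.
- exact: pj.
- exact: mu_ge0 H _ (ltnW jn).
- by rewrite /= divfK // lt0r_neq0.
- by rewrite subr_ge0.
- exact: ltW.
Qed.

Arguments xstep {R n lam mu alpha t b}.

Lemma closed_bound (R : realFieldType) (n : nat) (lam mu : nat -> R) (alpha : R) t b :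
  Hyp n lam mu alpha -> Rows n lam mu alpha t b -> forall j, (t <= j)%N -> (j < n)%N ->
  b j - b j.-1 <= rho lam mu alpha j.
Proof.
move=> H Hb; elim=> [|j IH] tj jn.
  by rewrite /= subrr.
case: (ltngtP t j.+1) tj => // [tj _| e _].
  have jn' : (j < n)%N by exact: ltnW.
  apply: (xstep H Hb) => //; first exact: IH.
have tn : (t <= n)%N by rewrite e ltnW.
by have := pt_eq H Hb tn; rewrite e /= => ->.
Qed.

Lemma open_bound (R : realFieldType) (n : nat) (lam mu : nat -> R) (alpha : R) t b :
  Hyp n lam mu alpha -> Rows n lam mu alpha t b -> (t <= n)%N ->
  forall m i, (i + m.+1)%N = t -> 0 <= b i.+1 - b i /\ b i.+1 - b i < 1.
Proof.
move=> H Hb tn; elim=> [|m IH] i hi.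
  rewrite addn1 in hi.
  have hin : (i.+1 <= n)%N by rewrite hi.
  have := pt_eq H Hb tn; rewrite -hi /= => ->.
  by have [] := rho_props H _ hin.
have hi' : (i.+1 + m.+1)%N = t by rewrite addSnnS.
have [h0 h1] := IH i.+1 hi'.
have hlt : (i.+1 < t)%N by rewrite -hi; lia.
have E : b i.+1 - b i = rho lam mu alpha i.+1 * (b i.+2 - b i.+1) := open_rel H Hb tn _ hlt.
rewrite E.
have [r0 r1 _] := rho_props H i.+1 (leq_trans (ltnW hlt) tn).
split; first exact: mulr_ge0.
move: h0 h1 r0 r1; move: (b i.+2 - b i.+1) (rho lam mu alpha i.+1) => x r h0 h1 r0 r1.
apply: (le_lt_trans _ h1); rewrite -[leRHS]mul1r ler_wpM2r //; exact: ltW.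
Qed.

Arguments closed_bound {R n lam mu alpha t b}.
Arguments open_bound {R n lam mu alpha t b}.

Lemma x_lt1 (R : realFieldType) (n : nat) (lam mu : nat -> R) (alpha : R) t b :
  Hyp n lam mu alpha -> Rows n lam mu alpha t b -> (t <= n)%N ->
  forall i, (i < n)%N -> b i.+1 - b i < 1.
Proof.
move=> H Hb tn i hi.
case: (ltnP i t) => it.
  have e : (i + (t - i.+1).+1)%N = t by lia.
  by have [] := open_bound H Hb tn _ _ e.
have := xstep H Hb i it hi (closed_bound H Hb i it hi).
have [_ r1 _] := rho_props H _ hi.
by move=> h; apply: le_lt_trans h r1.
Qed.

Lemma compare_p (R : realFieldType) (n : nat) (lam mu : nat -> R) (alpha : R) t t' b c :
  Hyp n lam mu alpha -> Rows n lam mu alpha t b -> Rows n lam mu alpha t' c ->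
  (t' <= t)%N -> (t <= n)%N ->
  forall j, (t <= j)%N -> (j < n)%N -> c j - c j.-1 <= b j - b j.-1.
Proof.
move=> H Hb Hc tt tn; elim=> [|j IH] tj jn.
  by rewrite !subrr.
case: (ltngtP t j.+1) tj => // [tj _| e _].
  have jn' : (j < n)%N by exact: ltnW.
  have e1 := closed_eq Hb j tj jn'.
  have e2 := closed_eq Hc j (leq_trans tt tj) jn'.
  have Ap : 0 < alpha + mu j.+1.
    have [ha _ _ _ _] := H; have := mu_ge0 H j.+1 (ltnW jn); lra.
  rewrite /= -(ler_pM2l Ap) e1 e2 lerD2l ler_wpM2l //; [exact: (mu_ge0 H j (ltnW jn')) | apply: IH => //].
have tn' : (t <= n)%N by rewrite e ltnW.
rewrite -e (pt_eq H Hb tn'); apply: (closed_bound H Hc) => //.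
by rewrite e.
Qed.

Arguments compare_p {R n lam mu alpha t t' b c}.
Arguments x_lt1 {R n lam mu alpha t b}.

Lemma compare_x (R : realFieldType) (n : nat) (lam mu : nat -> R) (alpha : R) t t' b c :
  Hyp n lam mu alpha -> Rows n lam mu alpha t b -> Rows n lam mu alpha t' c ->
  (t' <= t)%N -> (t <= n)%N ->
  forall j, (t <= j)%N -> (j < n)%N -> c j.+1 - c j <= b j.+1 - b j.
Proof.
move=> H Hb Hc tt tn j tj jn.
have e1 := closed_eq Hb j tj jn.
have e2 := closed_eq Hc j (leq_trans tt tj) jn.
have Ap : 0 < alpha + mu j.+1.
  have [ha _ _ _ _] := H; have := mu_ge0 H j.+1 jn; lra.
rewrite -(ler_pM2l Ap) e1 e2 lerD2l ler_wpM2l //; first exact: (mu_ge0 H j (ltnW jn)).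
exact: (compare_p H Hb Hc tt tn j tj jn).
Qed.
Lemma sum_if_eq (R : realFieldType) (n : nat) (f : 'I_n.+1 -> R) (k : nat) :
  \sum_(j < n.+1) (if (j : nat) == k then f j else 0) =
  if (k < n.+1)%N then f (inord k) else 0.
Proof.
case: ltnP => hk.
  rewrite (bigD1 (inord k)) //= inordK // eqxx big1 ?addr0 //.
  move=> j hj; case: eqP => // ej; move: hj; rewrite -(inj_eq val_inj) /= inordK // ej eqxx.
  by [].
rewrite big1 // => j _; case: eqP => // ej; have := ltn_ord j; lia.
Qed.

Lemma sum_if_eqS (R : realFieldType) (n : nat) (f : 'I_n.+1 -> R) (k : nat) :
  (k <= n.+1)%N ->
  \sum_(j < n.+1) (if (j : nat).+1 == k then f j else 0) =
  if (0 < k)%N then f (inord k.-1) else 0.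
Proof.
move=> hk; case: k hk => [|k] hk /=.
  by rewrite big1 // => j _.
by rewrite (@sum_if_eq _ _ f k) hk.
Qed.

Lemma row_formula (R : realFieldType) (n : nat) (lam mu : nat -> R) (alpha : R)
  (S : {set 'I_n.+1}) (v : 'cV[R]_n.+1) (i : 'I_n.+1) :
  ((alpha%:M - gen lam mu S) *m v) i 0 =
  (alpha + uprate lam S i + mu i) * v i 0
  - (if (i.+1 < n.+1)%N then uprate lam S i * v (inord i.+1) 0 else 0)
  - (if (0 < i)%N then mu i * v (inord i.-1) 0 else 0).
Proof.
set u := uprate lam S i.
have E : forall j : 'I_n.+1, (alpha%:M - gen lam mu S) i j * v j 0 =
   (if (j : nat) == i then (alpha + u + mu i) * v j 0 else 0)
   - (if (j : nat) == i.+1 then u * v j 0 else 0)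
   - (if (j : nat).+1 == i then mu i * v j 0 else 0).
  move=> j; rewrite !mxE -[i == j]val_eqE -[j == i]val_eqE /= -/u.
  have [ji|ji|ji] := ltngtP j i.
  - have -> : ((j : nat) == i.+1) = false by apply/eqP; lia.
    case: eqP => _; rewrite ?mulr0n; ring.
  - have -> : ((j : nat).+1 == i) = false by apply/eqP; lia.
    case: eqP => _; rewrite ?mulr0n; ring.
  - have -> : ((j : nat).+1 == i) = false by apply/eqP; lia.
    have -> : ((j : nat) == i.+1) = false by apply/eqP; lia.
    rewrite mulr1n; ring.
rewrite mxE (eq_bigr _ (fun j _ => E j)) !sumrB sum_if_eq sum_if_eq sum_if_eqS ?(ltnW (ltn_ord i)) //.
have -> : inord i = i by apply: val_inj; rewrite /= inordK.
by rewrite ltn_ord.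
Qed.

Lemma small (R : realFieldType) (a u m x U M : R) :
  0 < a -> 0 <= u -> 0 <= m -> `|U| <= u * `|x| -> `|M| <= m * `|x| ->
  (a + u + m) * x - U - M = 0 -> x = 0.
Proof.
move=> ha hu hm hU hM e.
have e' : (a + u + m) * x = U + M by apply/eqP; rewrite -subr_eq0 opprD addrA e.
have h : `|(a + u + m) * x| <= `|U| + `|M| by rewrite e' ler_normD.
rewrite normrM (ger0_norm (x := a + u + m)) in h; last by lra.
have h2 : a * `|x| <= 0 by lra.
have h3 : `|x| <= 0.
  by rewrite -(ler_pM2l ha) mulr0.
by apply/eqP; rewrite -normr_le0.
Qed.

Lemma kernel0 (R : realFieldType) (n : nat) (lam mu : nat -> R) (alpha : R)
  (S : {set 'I_n.+1}) (v : 'cV[R]_n.+1) :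
  0 < alpha -> (forall i, (i <= n)%N -> 0 <= lam i) -> (forall i, (i <= n)%N -> 0 <= mu i) ->
  (alpha%:M - gen lam mu S) *m v = 0 -> v = 0.
Proof.
move=> ha hl hm hv.
case: (@arg_maxP _ _ _ ord0 predT (fun j => `|v j 0|)) => // m _ hmax.
have mn : (m <= n)%N by rewrite -ltnS ltn_ord.
have hx : v m 0 = 0.
  have := congr1 (fun M : 'cV[R]_n.+1 => M m 0) hv; rewrite row_formula mxE.
  apply: small => //.
  - rewrite /uprate; case: ifP => // _; exact: hl.
  - exact: hm.
  - have hu : 0 <= uprate lam S m.
      rewrite /uprate; case: ifP => // _; exact: hl.
    case: ifP => _; last by rewrite normr0 mulr_ge0 ?normr_ge0.
    rewrite normrM ger0_norm // ler_wpM2l //; exact: hmax.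
  - case: ifP => _; last by rewrite normr0 mulr_ge0 ?normr_ge0 // hm.
    rewrite normrM ger0_norm ?hm // ler_wpM2l ?hm //; exact: hmax.
apply/matrixP => i j; rewrite (ord1 j) mxE; apply/eqP.
rewrite -normr_le0 -(normr0 R) -hx; exact: hmax.
Qed.

Arguments kernel0 {R n lam mu alpha S v}.

Lemma unitA (R : realFieldType) (n : nat) (lam mu : nat -> R) (alpha : R)
  (S : {set 'I_n.+1}) :
  0 < alpha -> (forall i, (i <= n)%N -> 0 <= lam i) -> (forall i, (i <= n)%N -> 0 <= mu i) ->
  (alpha%:M - gen lam mu S) \in unitmx.
Proof.
move=> ha hl hm.
rewrite -unitmx_tr -row_free_unit -kermx_eq0; apply/eqP/matrixP => r c.
have hK := mulmx_ker (alpha%:M - gen lam mu S)^T.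
have := congr1 (fun M : 'M[R]_(n.+1, n.+1) => (row r M)^T) hK.
rewrite /= row_mul trmx_mul trmxK row0 trmx0 => /(kernel0 ha hl hm) h0.
have := congr1 (fun M : 'cV[R]_n.+1 => M c 0) h0.
by rewrite !mxE.
Qed.

Arguments unitA {R n lam mu alpha} S.

Lemma row_eq_b (R : realFieldType) (n : nat) (lam mu : nat -> R) (alpha : R)
  (S : {set 'I_n.+1}) :
  0 < alpha -> (forall i, (i <= n)%N -> 0 <= lam i) -> (forall i, (i <= n)%N -> 0 <= mu i) ->
  mu 0%N = 0 ->
  forall i, (i <= n)%N ->
  (alpha + uprate lam S (inord i) + mu i) * b lam mu alpha S i
  - uprate lam S (inord i) * b lam mu alpha S i.+1
  - mu i * b lam mu alpha S i.-1 = rew lam S (inord i) 0.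
Proof.
move=> ha hl hm h0 i hi.
have hU := unitA S ha hl hm.
have E : (alpha%:M - gen lam mu S) *m bvec lam mu alpha S = rew lam S.
  by rewrite /bvec mulmxA mulmxV // mul1mx.
have := congr1 (fun M : 'cV[R]_n.+1 => M (inord i) 0) E.
rewrite row_formula inordK ?ltnS // => <-.
rewrite /b.
have -> : (0 : 'I_1) = ord0 by apply: val_inj.
have eu : ~~ (i < n)%N -> uprate lam S (inord i) = 0.
  move=> hin; rewrite /uprate /shut inordK ?ltnS //.
  have -> : i = n by apply/eqP; rewrite eqn_leq hi leqNgt.
  by rewrite eqxx orbT.
have em : (if (0 < i)%N then mu i * bvec lam mu alpha S (inord i.-1) ord0 else 0)
   = mu i * bvec lam mu alpha S (inord i.-1) ord0.
  by case: (posnP i) => [->|_] //; rewrite h0 mul0r.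
rewrite em; case: (ltnP i n) => hin //.
by rewrite eu ?mul0r // -leqNgt.
Qed.
Lemma shut_Sk (n k i : nat) :
  (i <= n)%N -> (k <= n.+1)%N -> shut (Sk n k) (inord i) = (k.-1 <= i)%N.
Proof.
move=> hi hk; rewrite /shut /Sk inE inordK //.
case: (leqP k.-1 i); case: (ltnP i n); lia.
Qed.

Lemma rows_Sk (R : realFieldType) (n : nat) (lam mu : nat -> R) (alpha : R) k :
  Hyp n lam mu alpha -> (1 <= k <= n.+1)%N ->
  Rows n lam mu alpha k.-1 (b lam mu alpha (Sk n k)).
Proof.
move=> H /andP[k1 kn] i hi; have [ha hl hm h0 hD] := H.
have hl0 : forall i, (i <= n)%N -> 0 <= lam i by move=> j hj; apply: ltW; apply: hl.
have := @row_eq_b _ _ lam mu alpha (Sk n k) ha hl0 (mu_ge0 H) h0 i hi.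
have hs := @shut_Sk n k i hi kn.

by rewrite /uprate /rew mxE hs inordK.
Qed.

Arguments rows_Sk {R n lam mu alpha k}.
Arguments compare_x {R n lam mu alpha t t' b c}.

Theorem proposition10 (R : realFieldType) (n : nat) (lam mu : nat -> R) (alpha : R) :
  (1 <= n)%N ->
  0 < alpha ->
  (forall i, (i <= n)%N -> 0 < lam i) ->
  (forall i, (1 <= i <= n)%N -> 0 < mu i) ->
  mu 0%N = 0 ->
  (forall i, (1 <= i <= n.-1)%N ->
     0 <= Dd lam mu i.+1 /\ Dd lam mu i.+1 <= Dd lam mu i) ->
  0 < Dd lam mu 1 ->
  (forall (S : {set 'I_n.+1}) (i : nat), inF S -> (i < n)%N ->
     0 < w lam mu alpha S i)
  /\
  (forall (S T : {set 'I_n.+1}) (i : nat), inF S -> inF T -> (i < n)%N ->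
     inord i \in S -> S \subset T ->
     w lam mu alpha S i <= w lam mu alpha T i).
Proof.
move=> hn ha hl hm h0 hD hD1.
have H : Hyp n lam mu alpha.
  split=> // -[|[|j]] //= hk; first exact: ltW.
  have hj : (1 <= j.+1 <= n.-1)%N by move: hk; clear; lia.
  by have [] := hD j.+1 hj.
split.
  move=> S i [k hk ->] hi.
  have li : (0 < lam i) by apply: hl; exact: ltnW.
  rewrite /w mulr_gt0 // subr_gt0.
  have tn : (k.-1 <= n)%N by lia.
  exact: (x_lt1 H (rows_Sk H hk) tn i hi).
move=> S T i [k hk ->] [k' hk' ->] hi hiS hST.
have hki : (k.-1 <= i)%N.
  by move: hiS; rewrite /Sk inE inordK; [case/andP | move: hi; clear; lia].
have htS : (inord k.-1 : 'I_n.+1) \in Sk n k.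
  rewrite /Sk inE inordK; move: hki hi; clear; lia.
have htT := subsetP hST _ htS.
have hkk : (k'.-1 <= k.-1)%N by move: htT; rewrite /Sk inE inordK; [case/andP | move: hki hi; clear; lia].
have tn : (k.-1 <= n)%N by move: hk; clear; lia.
have := compare_x H (rows_Sk H hk) (rows_Sk H hk') hkk tn i hki hi.
have li : (0 < lam i) by apply: hl; exact: ltnW.
move=> hc; rewrite /w; apply: ler_wpM2l; first exact: ltW.
by rewrite lerD2l lerN2.
Qed.
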